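(* There exists an absolute constant $C_2<1$ such that the following holds. Let $p$ be a prime, let $n\geq 2$ with $p>2n$, and let $A=\{v_1,\dots,v_n\}$ be a set of $n$ distinct elements of $\mathbb{Z}_p$. Let $Y_1,Y_2,Y_3$ be independent random variables, each uniformly distributed on $A$, and set $Y=Y_1+Y_2+Y_3$ (sum in $\mathbb{Z}_p$). Then $$\max_{x\in \mathbb{Z}_p} \mathbb{P}[Y=x]\leq\frac{C_2}{n}.$$
   Context: $\mathbb{Z}_p$ denotes the cyclic group of integers modulo the prime $p$. *)

(* Defs.v *)
From mathcomp Require Import all_boot all_order all_algebra.
Set Implicit Arguments. Unset Strict Implicit. Unset Printing Implicit Defensive.
Import GRing.Theory Num.Theory.
Local Open Scope ring_scope.

(* The joint law of (Y1,Y2,Y3) is the uniform law on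
   A x A x A, so P[Y1 + Y2 + Y3 = x] is the number of triples in A^3
   summing to x divided by #|A|^3. *)
Definition prob_sum3 (G : finZmodType) (A : {set G}) (x : G) : rat :=
  (#|[set t : G * G * G | [&& t.1.1 \in A, t.1.2 \in A, t.2 \in A
                            & t.1.1 + t.1.2 + t.2 == x]]|)%:R
  / ((#|A| ^ 3)%N)%:R.

(* Main.v *)
Require Import Defs.
From mathcomp Require Import all_boot all_order all_algebra.
From mathcomp Require Import zify ring lra.
Import GRing.Theory.
Local Open Scope ring_scope.

Lemma CD (G : finZmodType)
  (Hfill : forall (S : {set G}) (b s0 : G), b != 0 -> s0 \in S ->
       (forall s, s \in S -> s + b \in S) -> S = setT) :
  forall k (A B Q : {set G}), (0 < #|B| <= k)%N -> A != set0 ->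
  (forall a b, a \in A -> b \in B -> a + b \in Q) -> (#|Q| < #|G|)%N ->
  (#|A| + #|B| <= #|Q| + 1)%N.
Proof.
elim=> [|k IH] A B Q; first by case/andP=> h1 h2; move: h1; rewrite leqNgt ltnS h2.
case/andP=> B0 Bk A0 HQ Qlt.
have [b0 b0B] : exists b0, b0 \in B by apply/set0Pn; rewrite -card_gt0.
have [a0 a0A] : exists a0, a0 \in A by apply/set0Pn.
have AQ : (#|A| <= #|Q|)%N.
  rewrite -(card_imset A (addIr b0)); apply: subset_leq_card.
  by apply/subsetP => y /imsetP [a aA ->]; apply: HQ.
case: (boolP [exists e, exists b, [&& e \in A, b \in B & b - b0 + e \notin A]]).
  case/existsP => e /existsP [b /and3P [eA bB nA]].
  pose X := [set c - b0 + e | c in B].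
  pose A' := A :|: X.
  pose B' := [set c in B | c - b0 + e \in A].
  have cX : #|X| = #|B| by rewrite card_imset // => u v /addIr /addIr.
  have cAX : #|A :&: X| = #|B'|.
    rewrite -(card_imset B' (f := fun c => c - b0 + e)); last by move=> u v /addIr /addIr.
    apply: eq_card => y; apply/idP/idP.
      rewrite inE => /andP [yA] /imsetP [c cB ey]; apply/imsetP; exists c => //.
      by rewrite inE cB -ey.
    case/imsetP => c; rewrite inE => /andP [cB cA] ->; rewrite inE cA /=; apply/imsetP; by exists c.
  have B'sub2 : B' \subset B by apply/subsetP => c; rewrite inE => /andP [].
  have B'sub : B' \proper B.
    rewrite properEneq B'sub2 andbT.
    apply/eqP => e'; move: bB; rewrite -e' inE => /andP [_]; by rewrite (negbTE nA).
  have lt := proper_card B'sub.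
  have b0B' : b0 \in B' by rewrite inE b0B subrr add0r eA.
  have : (#|A'| + #|B'| <= #|Q| + 1)%N.
    apply: (IH A' B' Q).
    - rewrite (card_gt0 _) ; apply/andP; split; first by apply/set0Pn; exists b0.
      by rewrite -ltnS; apply: leq_trans lt Bk.
    - by apply/set0Pn; exists a0; rewrite inE a0A.
    - move=> a c; rewrite inE => /orP [aA|/imsetP [d dB ->]].
        by rewrite inE => /andP [cB _]; apply: HQ.
      rewrite inE => /andP [cB cA].
      have -> : d - b0 + e + c = (c - b0 + e) + d by rewrite -!addrA [LHS]addrCA [RHS]addrCA; congr (_ + _); rewrite [LHS]addrCA [RHS]addrCA (addrC d).
      by apply: HQ.
    - by [].
  rewrite cardsU cX cAX.
  have : (#|B'| <= #|A|)%N.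
    by rewrite -cAX; apply: subset_leq_card; apply: subsetIl.
  lia.
rewrite negb_exists => /forallP Hall.
case: (boolP (#|B| == 1%N)) => [/eqP ->|B1]; first by rewrite leq_add2r.
have [b bB bb0] : exists2 b, b \in B & b != b0.
  case: (boolP [exists b in B, b != b0]) => [/exists_inP //|].
  rewrite negb_exists_in => /forall_inP H.
  have : B \subset [set b0].
    by apply/subsetP => c cB; rewrite inE; move: (H c cB); rewrite negbK.
  move/subset_leq_card; rewrite cards1; move: B1 B0; lia.
have Hinv : forall e, e \in A -> e + (b - b0) \in A.
  move=> e eA; move: (Hall e); rewrite negb_exists => /forallP /(_ b).
  by rewrite eA bB /= negbK addrC.
have AT := Hfill A (b - b0) a0 ltac:(by rewrite subr_eq0) a0A Hinv.
move: AQ; rewrite AT cardsT => h.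
by move: Qlt; rewrite ltnNge h.
Qed.
Close Scope ring_scope.

Lemma card_sumT (T : finType) (S : {set T}) : #|S| = (\sum_(t : T) (t \in S)).
Proof. by rewrite -sum1_card big_mkcond; apply: eq_bigr => a _; case: (a \in S). Qed.

Section Count.
Variable G : finZmodType.

Lemma sum_shift (F : G -> nat) d : (\sum_(a : G) F (a - d)%R = \sum_(a : G) F a).
Proof. by rewrite [RHS](reindex_inj (addIr (- d)%R)). Qed.

Lemma sum_neg (F : G -> nat) c : (\sum_(a : G) F (c - a)%R = \sum_(a : G) F a).
Proof. by rewrite [RHS](reindex_inj (h := fun a => (c - a)%R)) //; move=> u v /subrI. Qed.

Lemma card_sum (A : {set G}) : #|A| = (\sum_(a : G) (a \in A)).
Proof. by rewrite -sum1_card big_mkcond; apply: eq_bigr => a _; case: (a \in A). Qed.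

Variable A : {set G}.
Local Notation n := #|A|.

Definition g (d : G) : nat := \sum_(a : G) ((a \in A) * ((a - d)%R \in A)).

Lemma g_le d : (g d <= n).
Proof.
rewrite card_sum; apply: leq_sum => a _; by case: (a \in A); case: ((a - d)%R \in A).
Qed.

Lemma g0 : g 0%R = n.
Proof. rewrite card_sum; apply: eq_bigr => a _; by rewrite GRing.subr0; case: (a \in A). Qed.

Lemma g_add d1 d2 : (g d1 + g d2 <= g (d1 + d2)%R + n).
Proof.
have e2 : g d2 = (\sum_(a : G) (((a - d1)%R \in A) * ((a - d1 - d2)%R \in A))).
  by rewrite (sum_shift (fun y => (y \in A) * ((y - d2)%R \in A))).
have en : n = (\sum_(a : G) ((a - d1)%R \in A)).
  by rewrite (sum_shift (fun y => nat_of_bool (y \in A))) card_sum.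
rewrite e2 en /g -!big_split /=; apply: leq_sum => a _.
rewrite opprD addrA.
by case: (a \in A); case: ((a - d1)%R \in A); case: ((a - d1 - d2)%R \in A).
Qed.

Lemma g_sum : (\sum_(d : G) g d = n * n).
Proof.
rewrite /g exchange_big /=.
have -> : (n * n = \sum_(a : G) (a \in A) * n).
  by rewrite -big_distrl /= -card_sum.
apply: eq_bigr => a _; rewrite -big_distrr /=; congr (_ * _).
by rewrite (sum_neg (fun y => nat_of_bool (y \in A))) card_sum.
Qed.

End Count.
Arguments sum_shift {G}. Arguments sum_neg {G}. Arguments card_sum {G}. Arguments g {G}.
Arguments g_le {G}. Arguments g0 {G}. Arguments g_add {G}. Arguments g_sum {G}.
Section M.
Variable G : finZmodType.
Variable A : {set G}.
Variable x : G.
Local Notation n := #|A|.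
Local Notation g := (g A).

Definition f (a : G) : nat := \sum_(b : G) ((b \in A) * ((x - a - b)%R \in A)).

Lemma f_alt a : f a = \sum_(c : G) (((c - a)%R \in A) * ((x - c)%R \in A)).
Proof.
etransitivity; first exact: (esym (sum_shift (fun b => (b \in A) * ((x - a - b)%R \in A))%N a)).
apply: eq_bigr => c _ /=; congr (_ * nat_of_bool (_ \in A))%N.
by rewrite opprB addrA subrK.
Qed.

Lemma f_pair a a' : (f a + f a' <= n + g (a' - a)%R)%N.
Proof.
have en : n = (\sum_(c : G) ((x - c)%R \in A)).
  by rewrite (sum_neg (fun y => nat_of_bool (y \in A))) card_sum.
have eg : g (a' - a)%R = \sum_(c : G) (((c - a)%R \in A) * ((c - a')%R \in A)).
  etransitivity; first exact: (esym (sum_shift (fun y => (y \in A) * ((y - (a' - a))%R \in A))%N a)).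
  apply: eq_bigr => c _ /=; congr (_ * nat_of_bool (_ \in A))%N.
  by rewrite opprB addrA subrK.
rewrite en eg !f_alt -!big_split /=; apply: leq_sum => c _.
by case: ((c - a)%R \in A); case: ((c - a')%R \in A); case: ((x - c)%R \in A).
Qed.


Lemma N_eq : #|[set t : G * G * G | [&& t.1.1 \in A, t.1.2 \in A, t.2 \in A
                            & (t.1.1 + t.1.2 + t.2 == x)%R]]| = (\sum_(a : G) (a \in A) * f a)%N.
Proof.
rewrite card_sumT.
transitivity (\sum_(ab : G * G) \sum_(c : G)
   nat_of_bool ([&& ab.1 \in A, ab.2 \in A, c \in A & (ab.1 + ab.2 + c == x)%R]))%N.
  by rewrite pair_bigA; apply: eq_bigr => t _; rewrite inE.
etransitivity; first exact: (esym (pair_bigA _ (fun a b => \sum_(c : G)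
   nat_of_bool ([&& a \in A, b \in A, c \in A & (a + b + c == x)%R]))%N)).
apply: eq_bigr => a _.
rewrite /f big_distrr /=; apply: eq_bigr => b _.
rewrite (bigD1 (x - a - b)%R) //= big1 ?addn0.
  have -> : (a + b + (x - a - b) = x)%R by rewrite -(addrA x) -opprD (addrC (a + b)%R) subrK.
  rewrite eqxx andbT.
  by case: (a \in A); case: (b \in A); case: ((x - a - b)%R \in A).
move=> c /negbTE hc.
suff -> : (a + b + c == x)%R = false by rewrite !andbF.
apply/negbTE; apply: contraFN hc => /eqP <-.
by rewrite -(addrA _ (-a)%R) -opprD [(a + b + c)%R]addrC addrK.
Qed.


Definition NN := (\sum_(a : G) (a \in A) * f a)%N.
Definition T a := (\sum_(a' : G) (a' \in A) * g (a' - a)%R)%N.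
Definition S := (\sum_(a : G) (a \in A) * T a)%N.

Lemma step1 a : (n * f a + NN <= n * n + T a)%N.
Proof.
have H : (\sum_(a' : G) (a' \in A) * (f a + f a') <= \sum_(a' : G) (a' \in A) * (n + g (a' - a)%R))%N.
  by apply: leq_sum => a' _; rewrite leq_mul2l f_pair orbT.
move: H; rewrite !(eq_bigr _ (fun a' _ => mulnDr _ _ _)) !big_split /= -!big_distrl /= -card_sum.
by [].
Qed.

Lemma step2 : (2 * n * NN <= n * n * n + S)%N.
Proof.
have H : (\sum_(a : G) (a \in A) * (n * f a + NN) <= \sum_(a : G) (a \in A) * (n * n + T a))%N.
  by apply: leq_sum => a _; rewrite leq_mul2l step1 orbT.
move: H; rewrite !(eq_bigr _ (fun a _ => mulnDr _ _ _)) !big_split /= -!big_distrl /= -card_sum.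
have -> : (\sum_(a : G) (a \in A) * (n * f a) = n * NN)%N.
  by rewrite /NN big_distrr; apply: eq_bigr => a _; rewrite mulnCA.
rewrite /S -mulnA mul2n -addnn mulnA; exact.
Qed.

Lemma step3 (P : {set G}) (HP : forall d, d \notin P -> (8 * g d <= 7 * n)%N) :
  (8 * S <= n * (7 * n * n + n * #|P|))%N.
Proof.
have HT : forall a, (8 * T a <= 7 * n * n + n * #|P|)%N.
  move=> a.
  have H : (\sum_(a' : G) 8 * ((a' \in A) * g (a' - a)%R) <=
            \sum_(a' : G) ((a' \in A) * (7 * n) + n * ((a' - a)%R \in P)))%N.
    apply: leq_sum => a' _.
    have gl := g_le A (a' - a)%R.
    case: (boolP ((a' - a)%R \in P)) => hP.
      move: gl; set m := g _; set k := #|A|; case: (a' \in A) => /=; lia.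
    have := HP _ hP; set m := g _; set k := #|A|; case: (a' \in A) => /=; lia.
  move: H; rewrite -big_distrr /= big_split /= -big_distrl -big_distrr /= -card_sum.
  rewrite (sum_shift (fun y => nat_of_bool (y \in P))) -card_sum.
  rewrite /T; set k := #|A|; set q := #|P|; move=> h; apply: leq_trans h _; nia.
have H : (\sum_(a : G) 8 * ((a \in A) * T a) <= \sum_(a : G) (a \in A) * (7 * n * n + n * #|P|))%N.
  apply: leq_sum => a _; have := HT a; case: (a \in A) => /=; lia.
move: H; rewrite -big_distrr -big_distrl /= -card_sum /S; set k := #|A|; set q := #|P|; set s := \sum_(a : G) _; lia.
Qed.


Lemma Qbound (Q : {set G}) (HQ : forall d, d \in Q -> (3 * n <= 4 * g d)%N) :
  (3 * n * #|Q| <= 4 * (n * n))%N.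
Proof.
rewrite -(g_sum A) big_distrr /= mulnC -sum_nat_const.
apply: (@leq_trans (\sum_(d in Q) 4 * g d)%N); first by apply: leq_sum.
rewrite [X in (_ <= X)%N](bigID (fun d => d \in Q)) /=; exact: leq_addr.
Qed.

Lemma main_bound
  (Hfill : forall (S : {set G}) (b s0 : G), b != 0%R -> s0 \in S ->
       (forall s, s \in S -> (s + b)%R \in S) -> S = setT)
  (n2 : (2 <= n)%N) (Hp : (2 * n < #|G|)%N) : (192 * NN <= 191 * n * n)%N.
Proof.
pose P := [set d | 7 * n <= 8 * g d]%N.
pose Q := [set d | 3 * n <= 4 * g d]%N.
have HPn : forall d, d \notin P -> (8 * g d <= 7 * n)%N.
  by move=> d; rewrite inE -ltnNge => /ltnW.
have Qb : (3 * #|Q| <= 4 * n)%N.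
  have := Qbound Q (fun d => ltac:(by rewrite inE)).
  rewrite -mulnA mulnCA (mulnCA 4) leq_pmul2l //; lia.
have P0 : (0%R : G) \in P by rewrite inE g0; lia.
have CDb : (#|P| + #|P| <= #|Q| + 1)%N.
  apply: (@CD G Hfill #|P|).
  - by rewrite leqnn andbT card_gt0; apply/set0Pn; exists 0%R.
  - by apply/set0Pn; exists 0%R.
  - move=> d1 d2; rewrite !inE => h1 h2.
    have := g_add A d1 d2; set u := g d1; set v := g d2; set w := g _; set k := n. lia.
  - lia.
have s2 := step2.
have s3 := @step3 P HPn.
move: s2 s3 CDb Qb n2.
set N := NN; set S := S; set k := n; set q := #|Q|; set r := #|P|.
move=> s2 s3 CDb Qb n2.
have h1 : (16 * k * N <= 15 * k * k * k + k * k * r)%N by nia.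
have h2 : (6 * r <= 4 * k + 3)%N by lia.
have h3 : (96 * k * N <= 94 * k * k * k + 3 * k * k)%N by nia.
have h4 : (k * (192 * N) <= k * (191 * k * k))%N by nia.
by rewrite leq_pmul2l in h4; [exact: h4| lia].
Qed.

End M.
Local Open Scope ring_scope.
Import Num.Theory.

Lemma Zp_fill p (pr : prime p) (S : {set 'Z_p}) (b s0 : 'Z_p) :
  b != 0 -> s0 \in S -> (forall s, s \in S -> s + b \in S) -> S = setT.
Proof.
move=> b0 s0S HS.
have p1 : (1 < p)%N by apply: prime_gt1.
have iter : forall k, s0 + b *+ k \in S.
  elim=> [|k IH]; first by rewrite mulr0n addr0.
  by rewrite mulrSr addrA; apply: HS.
have bU : b \is a GRing.unit.
  have -> : b = (nat_of_ord b)%:R by rewrite natr_Zp.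
  rewrite unitZpE // prime_coprime //.
  apply/negP => /dvdn_leq.
  have lt : (nat_of_ord b < p)%N by move: (ltn_ord b) (Zp_cast p1) => h e; rewrite -{2}e.
  have nz : (0 < nat_of_ord b)%N.
    rewrite lt0n; apply/negP => /eqP e; move/negP: b0; apply; apply/eqP.
    by apply: val_inj.
  move=> H; have := H nz; rewrite leqNgt lt //.
apply/setP => y; rewrite inE.
have := iter (nat_of_ord ((y - s0) * b^-1)).
by rewrite -mulr_natl natr_Zp divrK // addrC subrK.
Qed.

Theorem proposition3p2 :
  exists C2 : rat, C2 < 1 /\
    forall (p n : nat), prime p -> (2 <= n)%N -> (2 * n < p)%N ->
    forall A : {set 'Z_p}, #|A| = n ->
    forall x : 'Z_p, prob_sum3 A x <= C2 / n%:R.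
Proof.
exists (191 / 192); split; first by lra.
move=> p n pr n2 hp A cA x.
have Hfill := @Zp_fill p pr.
have p1 : (1 < p)%N by apply: prime_gt1.
have cG : #|'Z_p| = p by rewrite card_ord Zp_cast.
have key := @main_bound _ A x Hfill (ltac:(by rewrite cA)) (ltac:(by rewrite cA cG)).
rewrite /prob_sum3 (@N_eq _ A x) -/(@NN _ A x) cA.
move: key; rewrite cA; set N := NN _ _ _ => key.
have n0 : (0 < n)%N by lia.
have key' : 192 * (N%:R : rat) <= 191 * n%:R * n%:R.
  by move: key; rewrite -(ler_nat rat) !natrM.
have nr : 0 < (n%:R : rat) by rewrite ltr0n.
rewrite ler_pdivrMr; last by rewrite ltr0n expn_gt0 n0.
have -> : (191 / 192 / n%:R * ((n ^ 3)%N)%:R : rat) = 191 / 192 * (n%:R * n%:R : rat).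
  rewrite natrX.
  field.
  by rewrite pnatr_eq0 -lt0n.
clear key; lra.
Qed.
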